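(* For every $A\in\mathbb{C}^{m\times n}$ and every $\alpha_0,\beta_0\in(0,\tfrac{\pi}{2})$, $$\max_{z\in S^m_{\alpha_0}}\min_{w\in S^n_{\beta_0}}\mathrm{Re}(z^*Aw)=\min_{w\in S^n_{\beta_0}}\max_{z\in S^m_{\alpha_0}}\mathrm{Re}(z^*Aw),$$ i.e. $\underline v=\overline v$. Consequently every two-player zero-sum complex game $G_{\mathcal C}(A)$ has a complex Nash equilibrium in mixed complex strategies.
   Context: For $\gamma\in(0,\tfrac{\pi}{2})$ and $p\ge 1$ let $S^p_\gamma=\{z\in\mathbb{C}^p:\ \text{for each }k,\ z_k=0\text{ or }|\arg z_k|\le\gamma,\ \sum_{k=1}^p z_k=1\}$ ($\arg$ the principal argument in $(-\pi,\pi]$). The two-player zero-sum complex game $G_{\mathcal C}(A)$, for $A=(a_{ij})\in\mathbb{C}^{m\times n}$ and strategy arguments $\alpha_0,\beta_0\in(0,\tfrac{\pi}{2})$: player I chooses $z\in S^m_{\alpha_0}$, player II chooses $w\in S^n_{\beta_0}$, player I receives $\mathrm{Re}(z^*Aw)$ and player II receives $-\mathrm{Re}(z^*Aw)$, where $z^*$ is the conjugate transpose. A pair $(z^0,w^0)\in S^m_{\alpha_0}\times S^n_{\beta_0}$ is a complex Nash equilibrium if $\mathrm{Re}(z^*Aw^0)\le\mathrm{Re}((z^0)^*Aw^0)\le\mathrm{Re}((z^0)^*Aw)$ for all $z\in S^m_{\alpha_0}$, $w\in S^n_{\beta_0}$. *)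

(* Defs.v *)
From HB Require Import structures.
From mathcomp Require Import all_boot all_order all_algebra.
From mathcomp Require Import all_classical all_reals.
From mathcomp Require Import trigo.
From mathcomp Require Import complex.
Set Implicit Arguments. Unset Strict Implicit. Unset Printing Implicit Defensive.
Import Order.TTheory GRing.Theory Num.Theory.
Local Open Scope ring_scope.

Definition is_principal_arg (R : realType) (z : R[i]) (theta : R) : Prop :=
  - pi < theta <= pi /\
  exists r : R, 0 < r /\ complex.Re z = r * cos theta /\ complex.Im z = r * sin theta.

Definition strat_set (R : realType) (p : nat) (gamma : R) (z : 'cV[R[i]]_p) : Prop :=
  (forall k : 'I_p, z k 0 = 0 \/
     exists theta : R, is_principal_arg (z k 0) theta /\ `|theta| <= gamma) /\
  \sum_(k < p) z k 0 = 1.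

Definition payoff (R : realType) (m n : nat) (A : 'M[R[i]]_(m, n))
  (z : 'cV[R[i]]_m) (w : 'cV[R[i]]_n) : R :=
  complex.Re (((map_mx conjc z)^T *m A *m w) 0 0).

Definition is_min_on (T : Type) (R : realType) (P : T -> Prop) (g : T -> R) (v : R) : Prop :=
  (exists2 x, P x & g x = v) /\ (forall x, P x -> v <= g x).

Definition is_max_on (T : Type) (R : realType) (P : T -> Prop) (g : T -> R) (v : R) : Prop :=
  (exists2 x, P x & g x = v) /\ (forall x, P x -> g x <= v).

(* v = max_{z in Sz} min_{w in Sw} f z w  (all extrema attained) *)
Definition is_maxmin (T U : Type) (R : realType) (Sz : T -> Prop) (Sw : U -> Prop)
  (f : T -> U -> R) (v : R) : Prop :=
  (forall z, Sz z -> exists mz, is_min_on Sw (f z) mz) /\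
  (exists2 z0, Sz z0 & is_min_on Sw (f z0) v) /\
  (forall z mz, Sz z -> is_min_on Sw (f z) mz -> mz <= v).

(* v = min_{w in Sw} max_{z in Sz} f z w  (all extrema attained) *)
Definition is_minmax (T U : Type) (R : realType) (Sz : T -> Prop) (Sw : U -> Prop)
  (f : T -> U -> R) (v : R) : Prop :=
  (forall w, Sw w -> exists Mw, is_max_on Sz (fun z => f z w) Mw) /\
  (exists2 w0, Sw w0 & is_max_on Sz (fun z => f z w0) v) /\
  (forall w Mw, Sw w -> is_max_on Sz (fun z => f z w) Mw -> v <= Mw).

Definition complex_nash (R : realType) (m n : nat) (A : 'M[R[i]]_(m, n))
  (alpha0 beta0 : R) (z0 : 'cV[R[i]]_m) (w0 : 'cV[R[i]]_n) : Prop :=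
  strat_set alpha0 z0 /\ strat_set beta0 w0 /\
  (forall z, strat_set alpha0 z -> payoff A z w0 <= payoff A z0 w0) /\
  (forall w, strat_set beta0 w -> payoff A z0 w0 <= payoff A z0 w).

(* Main.v *)
Require Import Defs.
From HB Require Import structures.
From mathcomp Require Import all_boot all_order all_algebra.
From mathcomp Require Import all_classical all_reals.
From mathcomp Require Import trigo.
From mathcomp Require Import complex.
From mathcomp Require Import topology normedtype derive.
From mathcomp Require Import ring lra.
Import Order.TTheory GRing.Theory Num.Theory.
Import numFieldNormedType.Exports.
Local Open Scope ring_scope.
Set Implicit Arguments. Unset Strict Implicit. Unset Printing Implicit Defensive.

Definition simplex (R : realType) p (I : {set 'I_p}) (x : 'rV[R]_p) : Prop :=
  (forall i, 0 <= x ord0 i) /\ (forall i, i \notin I -> x ord0 i = 0) /\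
  \sum_i x ord0 i = 1.

Definition colv (R : realType) p q (M : 'I_p -> 'I_q -> R) (x : 'rV[R]_p) j :=
  \sum_i x ord0 i * M i j.

Definition gmin (R : realType) p q (M : 'I_p -> 'I_q -> R) (J : {set 'I_q}) j0
  (x : 'rV[R]_p) := \big[Order.min/colv M x j0]_(j in J) colv M x j.

Definition saddle (R : realType) p q (M : 'I_p -> 'I_q -> R) (M' : 'I_q -> 'I_p -> R)
  (I : {set 'I_p}) (J : {set 'I_q}) : Prop :=
  exists x y (v : R), simplex I x /\ simplex J y /\
    (forall j, j \in J -> v <= colv M x j) /\ (forall i, i \in I -> - v <= colv M' y i).

Lemma simplex_sub (R : realType) p (I I' : {set 'I_p}) (x : 'rV[R]_p) :
  I \subset I' -> simplex I x -> simplex I' x.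
Proof.
move=> sII [h1 [h2 h3]]; split=> //; split=> // i iI; apply: h2.
by apply: contra iI => /(fintype.subsetP sII).
Qed.

Lemma simplex_conv (R : realType) p (I : {set 'I_p}) (x y : 'rV[R]_p) (t : R) :
  simplex I x -> simplex I y -> 0 <= t <= 1 -> simplex I ((1 - t) *: x + t *: y).
Proof.
move=> [x1 [x2 x3]] [y1 [y2 y3]] /andP[t0 t1]; split; [|split].
- move=> i; rewrite !mxE; apply: addr_ge0; apply: mulr_ge0 => //; by rewrite subr_ge0.
- by move=> i iI; rewrite !mxE x2 // y2 // !mulr0 addr0.
- under eq_bigr do rewrite !mxE.
  by rewrite big_split /= -!mulr_sumr x3 y3 !mulr1 subrK.
Qed.

Lemma colv_conv (R : realType) p q (M : 'I_p -> 'I_q -> R) (x y : 'rV[R]_p) t j :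
  colv M ((1 - t) *: x + t *: y) j = (1 - t) * colv M x j + t * colv M y j.
Proof.
rewrite /colv !mulr_sumr -big_split /=; apply: eq_bigr => i _.
by rewrite !mxE mulrDl !mulrA.
Qed.

Lemma simplex_delta (R : realType) p (I : {set 'I_p}) i :
  i \in I -> simplex I (delta_mx ord0 i : 'rV[R]_p).
Proof.
move=> iI; split; [|split].
- by move=> k; rewrite mxE ler0n.
- move=> k kI; rewrite mxE eqxx /=; case: eqP => //= ki.
  by move: kI; rewrite ki iI.
- rewrite (bigD1 i) //= mxE !eqxx /= big1 ?addr0 // => k ki.
  by rewrite mxE (negbTE ki) andbF.
Qed.

Lemma colv_delta (R : realType) p q (M : 'I_p -> 'I_q -> R) i j :
  colv M (delta_mx ord0 i) j = M i j.
Proof.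
rewrite /colv (bigD1 i) //= mxE !eqxx /= mul1r big1 ?addr0 // => k ki.
by rewrite mxE (negbTE ki) andbF mul0r.
Qed.

Lemma supp_sum (R : realType) p (J : {set 'I_p}) (y : 'rV[R]_p) (c : 'I_p -> R) a :
  simplex J y -> (forall j, j \in J -> c j = a) -> \sum_j y ord0 j * c j = a.
Proof.
move=> [_ [y2 y3]] hc.
rewrite (eq_bigr (fun j => y ord0 j * a)); first by rewrite -mulr_suml y3 mul1r.
move=> j _; case: (boolP (j \in J)) => jJ; first by rewrite hc.
by rewrite y2 // !mul0r.
Qed.

Lemma bilin (R : realType) p q (M : 'I_p -> 'I_q -> R) (M' : 'I_q -> 'I_p -> R)
  (HM : forall i j, M' j i = - M i j) (x : 'rV[R]_p) (y : 'rV[R]_q) :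
  \sum_j y ord0 j * colv M x j = - \sum_i x ord0 i * colv M' y i.
Proof.
rewrite /colv -sumrN.
under eq_bigr do rewrite mulr_sumr.
rewrite exchange_big /=; apply: eq_bigr => i _.
rewrite mulr_sumr -sumrN; apply: eq_bigr => j _.
rewrite HM !mulrN opprK; ring.
Qed.

Lemma gmin_le (R : realType) p q (M : 'I_p -> 'I_q -> R) (J : {set 'I_q}) (j0 : 'I_q) (x : 'rV[R]_p) j :
  j \in J -> gmin M J j0 x <= colv M x j.
Proof. by move=> jJ; exact: bigmin_le_cond. Qed.

Lemma gmin_ge (R : realType) p q (M : 'I_p -> 'I_q -> R) (J : {set 'I_q}) (j0 : 'I_q) (x : 'rV[R]_p) m :
  j0 \in J -> (forall j, j \in J -> m <= colv M x j) -> m <= gmin M J j0 x.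
Proof. by move=> j0J h; apply/bigmin_geP; split => //; apply: h. Qed.

Lemma gmin_gt (R : realType) p q (M : 'I_p -> 'I_q -> R) (J : {set 'I_q}) (j0 : 'I_q) (x : 'rV[R]_p) m :
  j0 \in J -> (forall j, j \in J -> m < colv M x j) -> m < gmin M J j0 x.
Proof. by move=> j0J h; apply/bigmin_gtP; split => //; apply: h. Qed.

Lemma colv_cont (R : realType) p q (M : 'I_p -> 'I_q -> R) j :
  continuous (fun x : 'rV[R]_p => colv M x j).
Proof.
rewrite /colv.
suff H : forall s : seq 'I_p,
    continuous (fun x : 'rV[R]_p => \sum_(i <- s) x ord0 i * M i j).
  by apply: H.
elim=> [|i s IH].
  by under [X in continuous X]eq_fun do rewrite big_nil; exact: cst_continuous.
under [X in continuous X]eq_fun do rewrite big_cons.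
move=> x.
apply: (@continuousD R R^o _ (fun x0 : 'rV[R]_p => x0 ord0 i * M i j)
   (fun x0 : 'rV[R]_p => \sum_(i <- s) x0 ord0 i * M i j) x _ (IH x)).
apply: (@continuousM R _ (fun x0 : 'rV[R]_p => x0 ord0 i) (fun=> M i j) x).
  exact: coord_continuous.
exact: cst_continuous.
Qed.

Lemma gmin_cont (R : realType) p q (M : 'I_p -> 'I_q -> R) (J : {set 'I_q}) j0 :
  continuous (gmin M J j0).
Proof.
rewrite /gmin.
suff H : forall s : seq 'I_q,
    continuous (fun x : 'rV[R]_p =>
       \big[Order.min/colv M x j0]_(j <- s | j \in J) colv M x j).
  by apply: H.
elim=> [|j s IH].
  by under [X in continuous X]eq_fun do rewrite big_nil; exact: colv_cont.
case: (boolP (j \in J)) => jJ.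
  under [X in continuous X]eq_fun do rewrite big_cons jJ.
  move=> x.
  apply: (@continuous_min R _ (fun x0 : 'rV[R]_p => colv M x0 j)
     (fun x0 : 'rV[R]_p => \big[Order.min/colv M x0 j0]_(j <- s | j \in J) colv M x0 j) x).
    exact: colv_cont.
  exact: IH.
by under [X in continuous X]eq_fun do rewrite big_cons (negbTE jJ).
Qed.

Lemma simplex_compact (R : realType) p (I : {set 'I_p}) :
  compact (simplex (R:=R) I).
Proof.
apply: bounded_closed_compact.
  exists 1; split; first by rewrite num_real.
  move=> r r1 x [x1 [x2 x3]].
  rewrite /= [leLHS]/Num.norm /= mx_normrE; apply: bigmax_le; first by apply: ltW; apply: lt_trans r1.
  move=> [a b] _ /=; rewrite (ord1 a) ger0_norm //.
  apply: le_trans (ltW r1); rewrite -x3 (bigD1 b) //= lerDl.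
  by apply: sumr_ge0 => k _.
have -> : simplex (R:=R) I =
   ((\bigcap_(i in [set: 'I_p]) [set x : 'rV[R]_p | 0 <= x ord0 i]) `&`
   (\bigcap_(i in [set i | i \notin I]) [set x : 'rV[R]_p | x ord0 i = 0]) `&`
   [set x : 'rV[R]_p | \sum_i x ord0 i = 1])%classic.
  apply/seteqP; split.
    move=> x [x1 [x2 x3]]; split; [split|] => //.
    by move=> i _; apply: x1.
  move=> x [[x1 x2] x3]; split; [|split] => //.
  by move=> i; apply: x1.
apply: closedI; [apply: closedI|].
- apply: closed_bigI => i _.
  apply: (@preimage_closed _ _ (fun x : 'rV[R]_p => x ord0 i) [set y : R | 0 <= y]).
    by move=> x _; exact: coord_continuous.
  exact: closed_ge.
- apply: closed_bigI => i _.
  apply: (@preimage_closed _ _ (fun x : 'rV[R]_p => x ord0 i) [set y : R | y = 0]).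
    by move=> x _; exact: coord_continuous.
  exact: closed_eq.
- apply: (@preimage_closed _ _ (fun x : 'rV[R]_p => \sum_i x ord0 i) [set y : R | y = 1]).
    have -> : (fun x : 'rV[R]_p => \sum_i x ord0 i) =
       (fun x => colv (fun (i : 'I_p) (_ : 'I_1) => (1 : R)) x ord0).
      by apply/funext => x; rewrite /colv; apply: eq_bigr => i _; rewrite mulr1.
    by move=> x _; exact: colv_cont.
  exact: closed_eq.
Qed.

Lemma exmax (R : realType) p q (M : 'I_p -> 'I_q -> R) (I : {set 'I_p})
   (J : {set 'I_q}) j0 i0 : i0 \in I ->
  exists2 x0, simplex I x0 &
    forall x, simplex I x -> gmin M J j0 x <= gmin M J j0 x0.
Proof.
move=> i0I.
have ne : (simplex (R:=R) I !=set0)%classic.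
  by exists (delta_mx ord0 i0); apply: simplex_delta.
have ct : {within simplex (R:=R) I, continuous (gmin M J j0)}%classic.
  by apply: continuous_subspaceT; exact: gmin_cont.
have [c] := @EVT_max_rV R p (gmin M J j0) (simplex I) ne (@simplex_compact R p I) ct.
rewrite inE => cI H; exists c => // x xI; apply: H; by rewrite inE.
Qed.

Lemma step (R : realType) p q (M : 'I_p -> 'I_q -> R) (M' : 'I_q -> 'I_p -> R)
  (I : {set 'I_p}) (J : {set 'I_q}) i0 j0 j x0 y0 :
  i0 \in I -> j0 \in J -> j \in J ->
  simplex I x0 -> (forall x, simplex I x -> gmin M J j0 x <= gmin M J j0 x0) ->
  simplex J y0 -> (forall y, simplex J y -> gmin M' I i0 y <= gmin M' I i0 y0) ->
  gmin M J j0 x0 < colv M x0 j ->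
  saddle M M' I (J :\ j) ->
  0 <= gmin M J j0 x0 + gmin M' I i0 y0.
Proof.
move=> i0I j0J jJ x0I Hx y0J Hy hj [x' [y' [v' [x'I [y'J [hx hy]]]]]].
set g0 := gmin M J j0 x0.
have v'le : v' <= g0.
  rewrite leNgt; apply/negP => gv.
  set c0 := colv M x0 j; set c' := colv M x' j.
  set d := c0 - g0.
  have d0 : 0 < d by rewrite /d subr_gt0.
  set e := `|c' - c0|.
  have e0 : 0 <= e by rewrite /e normr_ge0.
  have de0 : 0 < 2 * (d + e) by lra.
  set t := d / (2 * (d + e)).
  have t0 : 0 < t by apply: divr_gt0.
  have tde : t * (2 * (d + e)) = d by rewrite /t mulfVK // gt_eqF.
  have t1 : t <= 1 by nra.
  have te : t * e <= d / 2 by nra.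
  have hc : - e <= c' - c0.
    by have : `|c' - c0| <= e by []; rewrite ler_norml => /andP[].
  have hte : - (t * e) <= t * (c' - c0) by rewrite -mulrN ler_wpM2l // ltW.
  have : g0 < gmin M J j0 ((1 - t) *: x0 + t *: x').
    apply: gmin_gt => // k kJ; rewrite colv_conv.
    case: (k =P j) => [->|kj].
      rewrite -/c0 -/c'.
      have dd : d = c0 - g0 by [].
      move: hte; rewrite mulrBr => hte.
      lra.
    have kJ' : k \in J :\ j by rewrite !inE kJ andbT; apply/eqP.
    have h1 := hx k kJ'.
    have h2 : g0 <= colv M x0 k by exact: gmin_le.
    nra.
  rewrite ltNge Hx //; apply: simplex_conv => //.
  by rewrite (ltW t0) t1.
have y'J2 : simplex J y' by apply: simplex_sub y'J; exact: subD1set.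
have h1 : - v' <= gmin M' I i0 y' by exact: gmin_ge.
have := Hy y' y'J2; lra.
Qed.

Lemma case1 (R : realType) p q (M : 'I_p -> 'I_q -> R) (M' : 'I_q -> 'I_p -> R)
  (HM : forall i j, M' j i = - M i j)
  (I : {set 'I_p}) (J : {set 'I_q}) i0 j0 x0 y0 :
  i0 \in I -> j0 \in J ->
  simplex I x0 -> (forall x, simplex I x -> gmin M J j0 x <= gmin M J j0 x0) ->
  simplex J y0 -> #|J| = 1%N ->
  0 <= gmin M J j0 x0 + gmin M' I i0 y0.
Proof.
move=> i0I j0J x0I Hx y0J /eqP/cards1P [j Jj].
have jj0 : j0 = j by move: j0J; rewrite Jj inE => /eqP.
have hx : forall i, i \in I -> M i j0 <= gmin M J j0 x0.
  move=> i iI; have := Hx (delta_mx ord0 i) (@simplex_delta R p I i iI); apply: le_trans.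
  apply: gmin_ge => // k; rewrite Jj inE => /eqP ->.
  by rewrite colv_delta jj0.
have : - gmin M J j0 x0 <= gmin M' I i0 y0.
  apply: gmin_ge => // i iI.
  rewrite /colv (@supp_sum _ _ J y0 (fun k => M' k i) (M' j0 i)) //.
    by rewrite HM lerN2 hx.
  by move=> k; rewrite Jj inE => /eqP ->; rewrite jj0.
lra.
Qed.

Lemma minimax_fin (R : realType) N : forall p q (M : 'I_p -> 'I_q -> R)
  (M' : 'I_q -> 'I_p -> R), (forall i j, M' j i = - M i j) ->
  forall (I : {set 'I_p}) (J : {set 'I_q}) i0 j0,
  (#|I| + #|J| <= N)%N -> i0 \in I -> j0 \in J -> saddle M M' I J.
Proof.
elim: N => [|N IH] p q M M' HM I J i0 j0 hN i0I j0J.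
  have : (0 < #|I|)%N by apply/card_gt0P; exists i0.
  move: hN; rewrite leqn0 addn_eq0 => /andP[/eqP -> _] //.
have [x0 x0I Hx] := exmax M J j0 i0I.
have [y0 y0J Hy] := exmax M' I i0 j0J.
have HM' : forall j i, M i j = - M' j i by move=> j i; rewrite HM opprK.
suff key : 0 <= gmin M J j0 x0 + gmin M' I i0 y0.
  exists x0, y0, (gmin M J j0 x0); split; [|split; [|split]] => //.
    by move=> j jJ; exact: gmin_le.
  by move=> i iI; have := gmin_le M' i0 y0 iI; lra.
case: (#|J| =P 1)%N => [J1|J1]; first exact: (case1 HM i0I j0J x0I Hx y0J J1).
case: (#|I| =P 1)%N => [I1|I1].
  by rewrite addrC; exact: (case1 HM' j0J i0I y0J Hy x0I I1).
have J2 : (1 < #|J|)%N.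
  have : (0 < #|J|)%N by apply/card_gt0P; exists j0.
  by move: J1; case: #|J| => [|[|n]].
have I2 : (1 < #|I|)%N.
  have : (0 < #|I|)%N by apply/card_gt0P; exists i0.
  by move: I1; case: #|I| => [|[|n]].
case: (boolP [exists j in J, gmin M J j0 x0 < colv M x0 j]).
  move=> /existsP[j /andP[jJ hj]].
  apply: (step i0I j0J jJ x0I Hx y0J Hy hj).
  have cJ : #|J| = (#|J :\ j|).+1 by rewrite (cardsD1 j J) jJ.
  have [j1 j1J] : exists j1, j1 \in J :\ j.
    by apply/card_gt0P; move: J2; rewrite cJ.
  apply: (IH _ _ M M' HM I (J :\ j) i0 j1) => //.
  by move: hN; rewrite cJ addnS.
move=> hnj.
case: (boolP [exists i in I, gmin M' I i0 y0 < colv M' y0 i]).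
  move=> /existsP[i /andP[iI hi]].
  rewrite addrC; apply: (step j0J i0I iI y0J Hy x0I Hx hi).
  have cI : #|I| = (#|I :\ i|).+1 by rewrite (cardsD1 i I) iI.
  have [i1 i1I] : exists i1, i1 \in I :\ i.
    by apply/card_gt0P; move: I2; rewrite cI.
  apply: (IH _ _ M' M HM' J (I :\ i) j0 i1) => //.
  by move: hN; rewrite cI addSn addnC.
move=> hni.
have e1 : \sum_j y0 ord0 j * colv M x0 j = gmin M J j0 x0.
  apply: (supp_sum y0J) => j jJ; apply/eqP; rewrite eq_le gmin_le // andbT.
  by move/existsPn: hnj => /(_ j); rewrite jJ /= -leNgt.
have e2 : \sum_i x0 ord0 i * colv M' y0 i = gmin M' I i0 y0.
  apply: (supp_sum x0I) => i iI; apply/eqP; rewrite eq_le gmin_le // andbT.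
  by move/existsPn: hni => /(_ i); rewrite iI /= -leNgt.
have := bilin HM x0 y0; rewrite e1 e2; lra.
Qed.
Local Open Scope complex_scope.

Lemma ReD (R : realType) (x y : R[i]) : complex.Re (x + y) = complex.Re x + complex.Re y.
Proof. by case: x => a b; case: y => c d. Qed.

Lemma ReRM (R : realType) (r : R) (x : R[i]) : complex.Re (r%:C * x) = r * complex.Re x.
Proof. by case: x => a b /=; rewrite mul0r subr0. Qed.

Lemma Re0 (R : realType) : complex.Re (0 : R[i]) = 0.
Proof. by []. Qed.

Lemma conjRM (R : realType) (r : R) (x : R[i]) : (r%:C * x)^* = r%:C * x^*.
Proof. by case: x => a b /=; rewrite /conjc /=; congr (_ +i* _); ring. Qed.

Lemma payoffDl (R : realType) m n (A : 'M[R[i]]_(m, n)) z1 z2 w :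
  payoff A (z1 + z2) w = payoff A z1 w + payoff A z2 w.
Proof.
by rewrite /payoff map_mxD linearD /= !mulmxDl mxE ReD.
Qed.

Lemma payoffZl (R : realType) m n (A : 'M[R[i]]_(m, n)) (r : R) z w :
  payoff A (r%:C *: z) w = r * payoff A z w.
Proof.
rewrite /payoff.
have -> : map_mx conjc (r%:C *: z) = r%:C *: map_mx conjc z.
  by apply/matrixP => i j; rewrite !mxE conjRM.
by rewrite linearZ /= -!scalemxAl mxE ReRM.
Qed.

Lemma payoffDr (R : realType) m n (A : 'M[R[i]]_(m, n)) z w1 w2 :
  payoff A z (w1 + w2) = payoff A z w1 + payoff A z w2.
Proof. by rewrite /payoff mulmxDr mxE ReD. Qed.

Lemma payoffZr (R : realType) m n (A : 'M[R[i]]_(m, n)) (r : R) z w :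
  payoff A z (r%:C *: w) = r * payoff A z w.
Proof. by rewrite /payoff -scalemxAr mxE ReRM. Qed.

Definition mix (R : realType) m P (l : 'rV[R]_P) (F : 'I_P -> 'cV[R[i]]_m) :=
  \sum_k (l ord0 k)%:C *: F k.

Lemma payoff_mixl (R : realType) m n P (A : 'M[R[i]]_(m, n)) l F w :
  payoff A (@mix R m P l F) w = \sum_k l ord0 k * payoff A (F k) w.
Proof.
rewrite /mix.
have h0 : payoff A 0 w = 0.
  by have := payoffZl A 0 0 w; rewrite mul0r scaler0.
rewrite (big_morph (fun z => payoff A z w) (fun a b => payoffDl A a b w) h0).
by apply: eq_bigr => k _; rewrite payoffZl.
Qed.

Lemma payoff_mixr (R : realType) m n P (A : 'M[R[i]]_(m, n)) l F z :
  payoff A z (@mix R n P l F) = \sum_k l ord0 k * payoff A z (F k).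
Proof.
rewrite /mix.
have h0 : payoff A z 0 = 0.
  by have := payoffZr A 0 z 0; rewrite mul0r scaler0.
rewrite (big_morph (fun w => payoff A z w) (fun a b => payoffDr A z a b) h0).
by apply: eq_bigr => k _; rewrite payoffZr.
Qed.

Lemma comp_cone (R : realType) (x : R[i]) (th g : R) :
  0 < g < pi / 2 -> is_principal_arg x th -> `|th| <= g ->
  0 <= complex.Re x * sin g + complex.Im x * cos g /\
  0 <= complex.Re x * sin g - complex.Im x * cos g.
Proof.
move=> /andP[g0 g1] [_ [r [r0 [hRe hIm]]]]; rewrite ler_norml => /andP[h1 h2].
have pi0 := @pi_gt0 R.
rewrite hRe hIm; split.
  have : 0 <= sin (th + g) by apply: sin_ge0_pi; apply/andP; split; lra.
  rewrite sinD => h; nra.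
have : 0 <= sin (g - th) by apply: sin_ge0_pi; apply/andP; split; lra.
rewrite sinB => h; nra.
Qed.

Lemma comp_arg (R : realType) (x : R[i]) (g : R) :
  0 < g < pi / 2 -> 0 < complex.Re x ->
  `|complex.Im x| * cos g <= complex.Re x * sin g ->
  exists th, is_principal_arg x th /\ `|th| <= g.
Proof.
move=> /andP[g0 g1] X0 hY.
set X := complex.Re x in X0 hY *; set Y := complex.Im x in hY *.
have pi0 := @pi_gt0 R.
have c0 : 0 < cos g by apply: cos_gt0_pihalf; apply/andP; split; lra.
set t := Y / X.
have [ha hb] := (atan_gtNpi2 t, atan_ltpi2 t).
have ct : 0 < cos (atan t) by apply: cos_gt0_pihalf; apply/andP; split.
exists (atan t); split; last first.
  have gin : g \in `](- (pi / 2)), (pi / 2)[ by rewrite in_itv /=; apply/andP; split; lra.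
  have tg : tan g = sin g / cos g by [].
  have hY1 : Y <= `|Y| := ler_norm Y.
  have hY2 : - Y <= `|Y| by rewrite -normrN ler_norm.
  rewrite ler_norml; apply/andP; split.
    rewrite -{1}(tanK gin) -atanN; apply: le_atan.
    rewrite tg /t ler_pdivlMr // -(ler_pM2r c0).
    have -> : - (sin g / cos g) * X * cos g = - (X * sin g).
      by field; rewrite gt_eqF.
    nra.
  rewrite -{1}(tanK gin); apply: le_atan.
  rewrite tg /t ler_pdivrMr // -(ler_pM2r c0).
  have -> : sin g / cos g * X * cos g = X * sin g.
    by field; rewrite gt_eqF.
  nra.
split; first by apply/andP; split; lra.
exists (X / cos (atan t)); split; first exact: divr_gt0.
split; first by rewrite divfK // gt_eqF.
have := atanK t; rewrite /tan => e.
rewrite -/Y.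
have -> : X / cos (atan t) * sin (atan t) = X * (sin (atan t) / cos (atan t)).
  by rewrite mulrAC mulrA.
by rewrite e /t mulrC divfK // gt_eqF.
Qed.

Lemma ImD (R : realType) (x y : R[i]) : complex.Im (x + y) = complex.Im x + complex.Im y.
Proof. by case: x => a b; case: y => c d. Qed.

Lemma ImRM (R : realType) (r : R) (x : R[i]) : complex.Im (r%:C * x) = r * complex.Im x.
Proof. by case: x => a b /=; rewrite mul0r addr0. Qed.

Lemma ReS (R : realType) (I : finType) (F : I -> R[i]) :
  complex.Re (\sum_i F i) = \sum_i complex.Re (F i).
Proof. exact: (big_morph _ (@ReD R) (Re0 R)). Qed.

Lemma ImS (R : realType) (I : finType) (F : I -> R[i]) :
  complex.Im (\sum_i F i) = \sum_i complex.Im (F i).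
Proof. by apply: (big_morph _ (@ImD R)). Qed.

Lemma mixRe (R : realType) m P (l : 'rV[R]_P) (F : 'I_P -> 'cV[R[i]]_m) k :
  complex.Re (mix l F k ord0) = \sum_p l ord0 p * complex.Re (F p k ord0).
Proof.
rewrite /mix summxE ReS; apply: eq_bigr => p _; by rewrite mxE ReRM.
Qed.

Lemma mixIm (R : realType) m P (l : 'rV[R]_P) (F : 'I_P -> 'cV[R[i]]_m) k :
  complex.Im (mix l F k ord0) = \sum_p l ord0 p * complex.Im (F p k ord0).
Proof.
rewrite /mix summxE ImS; apply: eq_bigr => p _; by rewrite mxE ImRM.
Qed.

Definition KK (R : realType) (g : R) : R := (2 * cos g)^-1.

Definition vtx (R : realType) m (g : R) (pr : 'I_m * 'I_m) : 'cV[R[i]]_m :=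
  \col_k ((KK g * ((k == pr.1)%:R + (k == pr.2)%:R) * cos g) +i*
          (KK g * ((k == pr.1)%:R - (k == pr.2)%:R) * sin g)).

Definition vt (R : realType) m (g : R) (p : 'I_#|{: 'I_m * 'I_m}|) := vtx g (enum_val p).

Lemma cplx_eq (R : realType) (x y : R[i]) :
  complex.Re x = complex.Re y -> complex.Im x = complex.Im y -> x = y.
Proof. by case: x => a b; case: y => c d /= -> ->. Qed.

Lemma sum_delta (R : realType) m (i : 'I_m) : \sum_k ((k == i)%:R : R) = 1.
Proof.
rewrite (bigD1 i) //= eqxx big1 ?addr0 // => k /negbTE ->; by [].
Qed.

Lemma KK_gt0 (R : realType) (g : R) : 0 < g < pi / 2 -> 0 < KK g.
Proof.
move=> /andP[g0 g1]; have pi0 := @pi_gt0 R.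
have c0 : 0 < cos g by apply: cos_gt0_pihalf; apply/andP; split; lra.
by rewrite /KK invr_gt0; lra.
Qed.

Lemma KKc (R : realType) (g : R) : 0 < g < pi / 2 -> KK g * (2 * cos g) = 1.
Proof.
move=> /andP[g0 g1]; have pi0 := @pi_gt0 R.
have c0 : 0 < cos g by apply: cos_gt0_pihalf; apply/andP; split; lra.
by rewrite /KK mulVf // gt_eqF //; lra.
Qed.

Lemma vtx_cone (R : realType) m (g : R) pr (k : 'I_m) :
  0 < g < pi / 2 ->
  0 <= complex.Re (vtx g pr k ord0) /\
  `|complex.Im (vtx g pr k ord0)| * cos g <= complex.Re (vtx g pr k ord0) * sin g.
Proof.
move=> hg; have K0 := KK_gt0 hg.
move: hg => /andP[g0 g1]; have pi0 := @pi_gt0 R.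
have c0 : 0 < cos g by apply: cos_gt0_pihalf; apply/andP; split; lra.
have s0 : 0 < sin g by apply: sin_gt0_pihalf; apply/andP; split; lra.
rewrite mxE /=.
set d1 : R := (k == pr.1)%:R; set d2 : R := (k == pr.2)%:R.
have h1 : 0 <= d1 by rewrite /d1 ler0n.
have h2 : 0 <= d2 by rewrite /d2 ler0n.
have hd : `|d1 - d2| <= d1 + d2.
  by rewrite /d1 /d2; case: (_ == _); case: (_ == _);
    rewrite /= ?subr0 ?sub0r ?subrr ?normrN ?normr1 ?normr0; lra.
split; first by apply: mulr_ge0; [apply: mulr_ge0; lra | lra].
rewrite !normrM (ger0_norm (ltW K0)) (ger0_norm (ltW s0)).
have e1 : KK g * `|d1 - d2| <= KK g * (d1 + d2) by rewrite ler_pM2l.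
have e2 : 0 <= sin g * cos g by apply: mulr_ge0; lra.
have -> : KK g * (d1 + d2) * cos g * sin g = KK g * (d1 + d2) * (sin g * cos g) by ring.
have -> : KK g * `|d1 - d2| * sin g * cos g = KK g * `|d1 - d2| * (sin g * cos g) by ring.
exact: ler_wpM2r.
Qed.

Lemma zero_of (R : realType) (x : R[i]) :
  complex.Re x = 0 -> complex.Im x = 0 -> x = 0.
Proof. by case: x => a b /= -> ->. Qed.

Lemma strat_mix (R : realType) m (g : R) (l : 'rV[R]_(#|{: 'I_m * 'I_m}|)) :
  0 < g < pi / 2 -> simplex [set: 'I_#|{: 'I_m * 'I_m}|] l -> strat_set g (mix l (vt g)).
Proof.
move=> hg [l0 [_ l1]].
have K2 := KKc hg.
have hg' := hg; move: hg' => /andP[g0 g1]; have pi0 := @pi_gt0 R.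
have c0 : 0 < cos g by apply: cos_gt0_pihalf; apply/andP; split; lra.
have s0 : 0 < sin g by apply: sin_gt0_pihalf; apply/andP; split; lra.
split.
  move=> k.
  have hX : 0 <= complex.Re (mix l (vt g) k ord0).
    rewrite mixRe; apply: sumr_ge0 => p _; apply: mulr_ge0 => //.
    exact: (vtx_cone _ _ hg).1.
  have hY : `|complex.Im (mix l (vt g) k ord0)| * cos g <=
            complex.Re (mix l (vt g) k ord0) * sin g.
    rewrite mixRe mixIm.
    apply: le_trans (ler_wpM2r (ltW c0) (ler_norm_sum _ _ _)) _.
    rewrite !mulr_suml; apply: ler_sum => p _.
    rewrite normrM (ger0_norm (l0 p)) -!mulrA; apply: ler_wpM2l => //.
    exact: (vtx_cone _ _ hg).2.
  case: (ltrgt0P (complex.Re (mix l (vt g) k ord0))) hX hY => [hp|hn|h0] hX hY.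
  - by right; apply: comp_arg.
  - by [].
  - left; apply: zero_of => //.
    move: hY; rewrite h0 mul0r => hY.
    apply/normr0_eq0/le_anti; rewrite normr_ge0 andbT.
    by rewrite -(ler_pM2r c0) mul0r.
apply: cplx_eq.
  rewrite ReS /=.
  under eq_bigr do rewrite mixRe.
  rewrite exchange_big /=.
  rewrite (eq_bigr (fun p => l ord0 p * (KK g * (2 * cos g)))).
    by rewrite -mulr_suml l1 mul1r K2.
  move=> p _; rewrite -mulr_sumr; congr (_ * _).
  under eq_bigr do rewrite mxE /=.
  rewrite -mulr_suml -mulr_sumr big_split /= !sum_delta; ring.
rewrite ImS /=.
under eq_bigr do rewrite mixIm.
rewrite exchange_big /= big1 // => p _.
rewrite -mulr_sumr.
under eq_bigr do rewrite mxE /=.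
by rewrite -mulr_suml -mulr_sumr sumrB !sum_delta subrr mulr0 mul0r mulr0.
Qed.

Lemma sum_ev (R : realType) m (F : 'I_m * 'I_m -> R) :
  \sum_(p < #|{: 'I_m * 'I_m}|) F (enum_val p) = \sum_i \sum_j F (i, j).
Proof. by rewrite -big_enum_val /= pair_big /=; apply: eq_bigr => -[]. Qed.

Lemma dsum (R : realType) m (f : 'I_m -> R) k : \sum_i f i * ((k == i)%:R : R) = f k.
Proof.
rewrite (bigD1 k) //= eqxx mulr1 big1 ?addr0 // => i ik.
by rewrite eq_sym (negbTE ik) mulr0.
Qed.

Lemma strat_dec (R : realType) m (g : R) (z : 'cV[R[i]]_m) :
  0 < g < pi / 2 -> strat_set g z ->
  exists l : 'rV[R]_(#|{: 'I_m * 'I_m}|),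
    simplex [set: 'I_#|{: 'I_m * 'I_m}|] l /\ z = mix l (vt g).
Proof.
move=> hg [hz hs].
have K2 := KKc hg; have K0 := KK_gt0 hg.
have hg' := hg; move: hg' => /andP[g0 g1]; have pi0 := @pi_gt0 R.
have c0 : 0 < cos g by apply: cos_gt0_pihalf; apply/andP; split; lra.
have s0 : 0 < sin g by apply: sin_gt0_pihalf; apply/andP; split; lra.
set s := sin g; set c := cos g; set K := KK g.
set X := fun k => complex.Re (z k ord0); set Y := fun k => complex.Im (z k ord0).
have sX : \sum_k X k = 1 by rewrite /X -ReS hs.
have sY : \sum_k Y k = 0 by rewrite /Y -ImS hs.
have D0 : 0 < 2 * s * c by apply: mulr_gt0 => //; apply: mulr_gt0.
set a := fun k => (X k * s + Y k * c) / (2 * s * c).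
set b := fun k => (X k * s - Y k * c) / (2 * s * c).
have hab : forall k, 0 <= a k /\ 0 <= b k.
  move=> k; rewrite /a /b.
  case: (hz k) => [z0|[th [hth hthg]]].
    by rewrite /X /Y z0 /= !mul0r addr0 subrr mul0r.
  have [h1 h2] := comp_cone hg hth hthg.
  by split; apply: divr_ge0 => //; apply: ltW.
have sa : \sum_k a k = K.
  rewrite /a -mulr_suml big_split /= -!mulr_suml sX sY /K /KK.
  by rewrite -/c; field; rewrite !gt_eqF.
have sb : \sum_k b k = K.
  rewrite /b -mulr_suml sumrB /= -!mulr_suml sX sY /K /KK.
  by rewrite -/c; field; rewrite !gt_eqF.
exists (\row_p (a (enum_val p).1 * b (enum_val p).2 / K ^+ 2)).
split.
  split; [|split].
  - move=> p; rewrite mxE; apply: divr_ge0; last by apply: exprn_ge0; apply: ltW.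
    by apply: mulr_ge0; [exact: (hab _).1 | exact: (hab _).2].
  - by move=> p; rewrite finset.in_setT.
  - under eq_bigr do rewrite mxE.
    rewrite (sum_ev (fun pr => a pr.1 * b pr.2 / K ^+ 2)) /=.
    rewrite (eq_bigr (fun i => a i * K / K ^+ 2)).
      rewrite -mulr_suml -mulr_suml sa; field; by rewrite gt_eqF.
    by move=> i _; rewrite -mulr_suml -mulr_sumr sb.
apply/matrixP => k j0; rewrite (ord1 j0); apply: cplx_eq.
  rewrite mixRe.
  under eq_bigr do rewrite !mxE /=.
  rewrite (sum_ev (fun pr => a pr.1 * b pr.2 / K ^+ 2 *
            (K * ((k == pr.1)%:R + (k == pr.2)%:R) * c))) /=.
  have -> : \sum_i \sum_j a i * b j / K ^+ 2 * (K * ((k == i)%:R + (k == j)%:R) * c)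
      = c / K * (\sum_i (a i * \sum_j b j) * (k == i)%:R
                 + \sum_i a i * \sum_j b j * (k == j)%:R).
    rewrite -big_split /= mulr_sumr; apply: eq_bigr => i _.
    rewrite !mulr_sumr !mulr_suml -big_split /= mulr_sumr; apply: eq_bigr => j _.
    by field; rewrite gt_eqF.
  under [X in _ = c / K * (_ + X)]eq_bigr do rewrite dsum.
  rewrite dsum sb -(mulr_suml _ _ a) sa /a /b /X /K /=.
  field; rewrite !gt_eqF //.
rewrite mixIm.
under eq_bigr do rewrite !mxE /=.
rewrite (sum_ev (fun pr => a pr.1 * b pr.2 / K ^+ 2 *
          (K * ((k == pr.1)%:R - (k == pr.2)%:R) * s))) /=.
have -> : \sum_i \sum_j a i * b j / K ^+ 2 * (K * ((k == i)%:R - (k == j)%:R) * s)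
    = s / K * (\sum_i (a i * \sum_j b j) * (k == i)%:R
               - \sum_i a i * \sum_j b j * (k == j)%:R).
  rewrite -sumrB /= mulr_sumr; apply: eq_bigr => i _.
  rewrite !mulr_sumr !mulr_suml -sumrB /= mulr_sumr; apply: eq_bigr => j _.
  by field; rewrite gt_eqF.
under [X in _ = s / K * (_ - X)]eq_bigr do rewrite dsum.
rewrite dsum sb -(mulr_suml _ _ a) sa /a /b /Y /K /=.
field; rewrite !gt_eqF //.
Qed.

Lemma sum_le_simplex (R : realType) P (I : {set 'I_P}) (l : 'rV[R]_P) (c : 'I_P -> R) v :
  simplex I l -> (forall k, c k <= v) -> \sum_k l ord0 k * c k <= v.
Proof.
move=> [l0 [_ l1]] h.
rewrite -[X in _ <= X](mul1r v) -l1 mulr_suml.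
by apply: ler_sum => k _; apply: ler_wpM2l.
Qed.

Lemma sum_ge_simplex (R : realType) P (I : {set 'I_P}) (l : 'rV[R]_P) (c : 'I_P -> R) v :
  simplex I l -> (forall k, v <= c k) -> v <= \sum_k l ord0 k * c k.
Proof.
move=> [l0 [_ l1]] h.
rewrite -[X in X <= _](mul1r v) -l1 mulr_suml.
by apply: ler_sum => k _; apply: ler_wpM2l.
Qed.

Lemma mix_delta (R : realType) m P (F : 'I_P -> 'cV[R[i]]_m) k :
  mix (delta_mx ord0 k) F = F k.
Proof.
rewrite /mix (bigD1 k) //= mxE !eqxx /= scale1r big1 ?addr0 // => j jk.
by rewrite mxE (negbTE jk) andbF scale0r.
Qed.

Lemma vt_strat (R : realType) m (g : R) k :
  0 < g < pi / 2 -> strat_set g (@vt R m g k).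
Proof.
move=> hg; rewrite -(mix_delta (vt g) k); apply: strat_mix => //.
exact: simplex_delta.
Qed.

Close Scope complex_scope.
Unset Implicit Arguments.

Theorem theorem5p2 (R : realType) (m n : nat) (A : 'M[R[i]]_(m, n))
  (alpha0 beta0 : R) :
  (0 < m)%N -> (0 < n)%N ->
  0 < alpha0 < pi / 2 -> 0 < beta0 < pi / 2 ->
  (exists v : R,
     is_maxmin (strat_set alpha0) (strat_set beta0) (payoff A) v /\
     is_minmax (strat_set alpha0) (strat_set beta0) (payoff A) v) /\
  (exists z0 w0, complex_nash A alpha0 beta0 z0 w0).
Proof.
move=> m0 n0 ha hb.
pose VA := @vt R m alpha0; pose WB := @vt R n beta0.
pose Mf := fun k l => payoff A (VA k) (WB l).
pose Mf' := fun l k => - Mf k l.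
have i0 := enum_rank (Ordinal m0, Ordinal m0).
have j0 := enum_rank (Ordinal n0, Ordinal n0).
have [x [y [v [xI [yJ [hx hy]]]]]] :=
  @minimax_fin R _ _ _ Mf Mf' (fun i j => erefl) [set: _] [set: _] i0 j0
    (leqnn _) (finset.in_setT _) (finset.in_setT _).
pose z0 := mix x VA; pose w0 := mix y WB.
have Mrow : forall k, \sum_l y ord0 l * Mf k l <= v.
  move=> k; have := hy k (finset.in_setT _); rewrite /colv /Mf'.
  under eq_bigr do rewrite mulrN.
  by rewrite sumrN lerN2.
have Mcol : forall l, v <= \sum_k x ord0 k * Mf k l.
  by move=> l; have := hx l (finset.in_setT _).
have F1 : forall z, strat_set alpha0 z -> payoff A z w0 <= v.
  move=> z /(strat_dec ha) [lam [lamI ->]].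
  rewrite payoff_mixl; apply: (sum_le_simplex lamI) => k.
  by rewrite payoff_mixr; apply: Mrow.
have F2 : forall w, strat_set beta0 w -> v <= payoff A z0 w.
  move=> w /(strat_dec hb) [mu [muI ->]].
  rewrite payoff_mixr; apply: (sum_ge_simplex muI) => l.
  by rewrite payoff_mixl; apply: Mcol.
have z0S : strat_set alpha0 z0 by apply: strat_mix.
have w0S : strat_set beta0 w0 by apply: strat_mix.
have F3 : payoff A z0 w0 = v by apply/le_anti; rewrite F1 // F2.
have minz : forall z, strat_set alpha0 z -> exists mz, is_min_on (strat_set beta0) (payoff A z) mz.
  move=> z zS.
  case: (@arg_minP _ _ _ j0 predT (fun l => payoff A z (WB l)) isT) => l _ hl.
  exists (payoff A z (WB l)); split.
    by exists (WB l) => //; apply: vt_strat.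
  move=> w /(strat_dec hb) [mu [muI ->]].
  by rewrite payoff_mixr; apply: (sum_ge_simplex muI) => l'; apply: hl.
have maxw : forall w, strat_set beta0 w -> exists Mw, is_max_on (strat_set alpha0) (fun z => payoff A z w) Mw.
  move=> w wS.
  case: (@arg_maxP _ _ _ i0 predT (fun k => payoff A (VA k) w) isT) => k _ hk.
  exists (payoff A (VA k) w); split.
    by exists (VA k) => //; apply: vt_strat.
  move=> z /(strat_dec ha) [lam [lamI ->]].
  by rewrite payoff_mixl; apply: (sum_le_simplex lamI) => k'; apply: hk.
split.
  exists v; split.
    split; first exact: minz.
    split.
      exists z0 => //; split; first by exists w0.
      exact: F2.
    move=> z mz zS [_ hmz]; apply: le_trans (hmz _ w0S) _; exact: F1.
  split; first exact: maxw.
  split.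
    exists w0 => //; split; first by exists z0.
    exact: F1.
  move=> w Mw wS [_ hMw]; apply: le_trans (hMw _ z0S); exact: F2.
exists z0, w0; split; [|split; [|split]] => //.
  by move=> z zS; rewrite F3; apply: F1.
by move=> w wS; rewrite F3; apply: F2.
Qed.
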